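(* Let $1\le N_a<N_b$, $\mathcal N=N_a+N_b$, real $\kappa_1<\dots<\kappa_{\mathcal N}$ with indices taken modulo $\mathcal N$. For $q=(q_1,q_2)\in\mathbb R^2$ define $q_{mn}=q_2-(\kappa_m+\kappa_n)q_1+\kappa_m\kappa_n$, $\widetilde q_{mn}=(\kappa_m-\kappa_n)q_{mn}$, and $\rho_k(q)=\theta(\widetilde q_{k,k-N_a})\,\theta(\widetilde q_{k+N_a,k})$, where $\theta$ is the Heaviside step function. Fix $m$. Then the region of the $q$-plane with characteristic function $$P_m(q)=\prod_{k=m+N_a}^{m+N_b}\rho_k(q)$$ is a polygon contained in the parabolic region $q_2\ge q_1^2$ and having a vertex at the point $Q_m=(\kappa_m,\kappa_m^2)$. More precisely, this polygon is contained in the polygon with vertices $Q_m,Q_{m+1},\dots,Q_{m+N_b}$ (where $Q_l=(\kappa_l,\kappa_l^2)$), coincides with that polygon when $N_a=1$, and lies in the strip $\min_{m\le l\le m+N_b}\kappa_l\le q_1\le\max_{m\le l\le m+N_b}\kappa_l$.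
   Context: Indices of $\kappa$ are read modulo $\mathcal N$, i.e. $\kappa_{l+\mathcal N}=\kappa_l$ for all $l\in\mathbb Z$. *)

(* Defs.v *)
From HB Require Import structures.
From mathcomp Require Import all_boot all_order all_algebra.
From mathcomp Require Import boolp classical_sets reals.
Set Implicit Arguments. Unset Strict Implicit. Unset Printing Implicit Defensive.
Import Order.TTheory GRing.Theory Num.Theory.
Local Open Scope ring_scope.
Local Open Scope classical_set_scope.

(* Points q = (q_1, q_2) of the plane are pairs in R * R.
   kap : nat -> R is the sequence kappa, with indices read modulo
   N = Na + Nb (imposed as a periodicity hypothesis in the theorem). *)

Section Defs.
Variable R : realType.

(* Heaviside step function, convention theta(0) = 1 (closed region). *)
Definition heaviside (x : R) : R := if 0 <= x then 1 else 0.

Definition qmn (kap : nat -> R) (m n : nat) (q : R * R) : R :=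
  q.2 - (kap m + kap n) * q.1 + kap m * kap n.

Definition qtilde (kap : nat -> R) (m n : nat) (q : R * R) : R :=
  (kap m - kap n) * qmn kap m n q.

Definition rho (kap : nat -> R) (Na k : nat) (q : R * R) : R :=
  heaviside (qtilde kap k (k - Na) q) * heaviside (qtilde kap (k + Na) k q).

Definition Pm (kap : nat -> R) (Na Nb m : nat) (q : R * R) : R :=
  \prod_(m + Na <= k < (m + Nb).+1) rho kap Na k q.

Definition regionP (kap : nat -> R) (Na Nb m : nat) : set (R * R) :=
  [set q | Pm kap Na Nb m q = 1].

Definition Qpt (kap : nat -> R) (l : nat) : R * R := (kap l, kap l ^+ 2).

Definition Qpts (kap : nat -> R) (m Nb : nat) : seq (R * R) :=
  [seq Qpt kap l | l <- iota m Nb.+1].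

(* convex hull of a finite list of points = polygon with these vertices *)
Definition conv_hull (s : seq (R * R)) : set (R * R) :=
  [set q | exists w : 'I_(size s) -> R,
      (forall i, 0 <= w i) /\ \sum_i w i = 1 /\
      q = (\sum_i w i * (nth (0, 0) s i).1, \sum_i w i * (nth (0, 0) s i).2)].

Definition is_polygon (S : set (R * R)) : Prop :=
  (exists s : seq (R * R), S = conv_hull s) /\
  (exists (c : R * R) (e : R), 0 < e /\
     forall q : R * R, `|q.1 - c.1| < e -> `|q.2 - c.2| < e -> S q).

Definition is_vertex (S : set (R * R)) (v : R * R) : Prop :=
  S v /\ forall (x y : R * R) (t : R), S x -> S y -> 0 < t < 1 ->
    v = (t * x.1 + (1 - t) * y.1, t * x.2 + (1 - t) * y.2) -> x = v /\ y = v.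

End Defs.

(* Main.v *)
Require Import Defs.
From HB Require Import structures.
From mathcomp Require Import all_boot all_order all_algebra.
From mathcomp Require Import boolp classical_sets reals.
From mathcomp Require Import ring lra.
Import Order.TTheory GRing.Theory Num.Theory.
Local Open Scope ring_scope.
Local Open Scope classical_set_scope.
Set Implicit Arguments. Unset Strict Implicit. Unset Printing Implicit Defensive.
Section G.
Variable R : realType.
Implicit Types (s : seq (R * R)) (F : seq (R * R * R)).

Definition ev (f : R * R * R) (q : R * R) : R := f.1.1 * q.1 + f.1.2 * q.2 + f.2.
Definition inS F q := all (fun f => 0 <= ev f q) F.

Lemma sum_ind n (i0 : 'I_n) (h : 'I_n -> R) :
  \sum_(j < n) (j == i0)%:R * h j = h i0.
Proof.
rewrite (bigD1 i0) //= eqxx mul1r big1 ?addr0 // => j /negbTE -> ; by rewrite mul0r.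
Qed.

Lemma hull_elem s i : (i < size s)%N -> conv_hull s (nth (0,0) s i).
Proof.
move=> Hi; exists (fun j : 'I_(size s) => (j == Ordinal Hi)%:R); split.
  by move=> j; case: (j == _).
split.
  have := sum_ind (Ordinal Hi) (fun _ => 1); under eq_bigr do rewrite mulr1; by [].
by rewrite !sum_ind /=; case: (nth _ _ _).
Qed.

Lemma hull_convex s x y t : conv_hull s x -> conv_hull s y -> 0 <= t <= 1 ->
  conv_hull s (t * x.1 + (1 - t) * y.1, t * x.2 + (1 - t) * y.2).
Proof.
move=> [w [w0 [w1 ->]]] [v [v0 [v1 ->]]] /andP[t0 t1].
exists (fun i => t * w i + (1 - t) * v i); split.
  move=> i; apply: addr_ge0; apply: mulr_ge0 => //; by rewrite subr_ge0.
split.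
  by rewrite big_split /= -!mulr_sumr w1 v1 !mulr1 addrC subrK.
congr pair; rewrite !mulr_sumr -big_split; apply: eq_bigr => i _ /=; ring.
Qed.

Lemma ev_hull F s q : (forall i, (i < size s)%N -> inS F (nth (0,0) s i)) ->
  conv_hull s q -> inS F q.
Proof.
move=> Hs [w [w0 [w1 ->]]]; apply/allP => f fF.
have -> : ev f (\sum_i w i * (nth (0, 0) s i).1, \sum_i w i * (nth (0, 0) s i).2)
  = \sum_i w i * ev f (nth (0,0) s i).
  rewrite /ev /=.
  transitivity (\sum_i (f.1.1 * (w i * (nth (0, 0) s i).1) + f.1.2 * (w i * (nth (0, 0) s i).2) + f.2 * w i)).
    by rewrite !big_split /= -!mulr_sumr w1 mulr1.
  by apply: eq_bigr => i _; ring.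
apply: sumr_ge0 => i _; apply: mulr_ge0 => //.
by move: (Hs i (ltn_ord i)) => /allP /(_ f fF).
Qed.

Lemma argmin (T : eqType) (s : seq T) (h : T -> R) : s != [::] ->
  exists2 x, x \in s & forall y, y \in s -> h x <= h y.
Proof.
elim: s => // a s IH _; case: (eqVneq s [::]) => [->|ns].
  by exists a => [|y]; rewrite ?inE // => /eqP ->.
have [x xs Hx] := IH ns; case: (leP (h a) (h x)) => H.
  exists a; first by rewrite inE eqxx.
  move=> y; rewrite inE => /orP[/eqP -> //|/Hx]; exact: le_trans.
exists x; first by rewrite inE xs orbT.
move=> y; rewrite inE => /orP[/eqP -> |/Hx //]; exact: ltW.
Qed.

Lemma posmin (T : eqType) (s : seq T) (h : T -> R) :
  (forall x, x \in s -> 0 < h x) -> exists d, 0 < d /\ forall x, x \in s -> d <= h x.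
Proof.
elim: s => [|a s IH] H; first by exists 1; split.
have [d [d0 Hd]] : exists d, 0 < d /\ forall x, x \in s -> d <= h x.
  by apply: IH => x xs; apply: H; rewrite inE xs orbT.
exists (Order.min d (h a)); split.
  by rewrite lt_min d0 H // inE eqxx.
move=> x; rewrite inE => /orP[/eqP ->|xs]; rewrite ge_min ?lexx ?orbT //.
by rewrite Hd.
Qed.

End G.
Section G2.
Variable R : realType.
Implicit Types (s : seq (R * R)) (F : seq (R * R * R)).

Definition mv (f : R * R * R) (t : R) (p : R * R) : R * R :=
  (p.1 + t * f.1.2, p.2 - t * f.1.1).
Definition negf (f : R * R * R) : R * R * R := ((- f.1.1, - f.1.2), - f.2).
Definition slope (f g : R * R * R) := g.1.1 * f.1.2 - g.1.2 * f.1.1.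

Lemma ev_mv f g t p : ev g (mv f t p) = ev g p + t * slope f g.
Proof. rewrite /ev /mv /slope /=; ring. Qed.

Lemma forward F M f p :
  (forall q, inS F q -> `|q.1| <= M /\ `|q.2| <= M) ->
  inS F p -> 0 < `|f.1.1| + `|f.1.2| ->
  exists g, exists t, [/\ g \in F, 0 <= t, inS F (mv f t p),
     ev g (mv f t p) = 0 & slope f g != 0].
Proof.
move=> Hb Hp Hf.
have evp : forall g, g \in F -> 0 <= ev g p by move=> g gF; move/allP: Hp => /(_ g gF).
case: (eqVneq [seq g <- F | slope f g < 0] [::]) => HG.
  exfalso.
  have Hall : forall t, 0 <= t -> inS F (mv f t p).
    move=> t t0; apply/allP => g gF; rewrite ev_mv.
    have : slope f g >= 0.
      rewrite leNgt; apply/negP => sl.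
      have : g \in [seq g <- F | slope f g < 0] by rewrite mem_filter sl gF.
      by rewrite HG.
    move=> sl; apply: addr_ge0; [exact: evp | exact: mulr_ge0].
  set t := (`|p.1| + `|p.2| + 2 * M + 1) / (`|f.1.1| + `|f.1.2|).
  have t0 : 0 <= t by apply: divr_ge0 => //; have := Hb p Hp; case=> a b;
    apply: addr_ge0 => //; apply: addr_ge0; [apply: addr_ge0 => //|]; 
    apply: mulr_ge0 => //; exact: le_trans (normr_ge0 _) a.
  have [h1 h2] := Hb _ (Hall t t0).
  rewrite /mv /= in h1 h2.
  have e1 : t * `|f.1.2| <= M + `|p.1|.
    have -> : t * `|f.1.2| = `|(p.1 + t * f.1.2) - p.1| by rewrite addrC addKr normrM ger0_norm.
    apply: le_trans (ler_normB _ _) _; exact: lerD.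
  have e2 : t * `|f.1.1| <= M + `|p.2|.
    have -> : t * `|f.1.1| = `|p.2 - (p.2 - t * f.1.1)| by rewrite opprB addrC subrK normrM ger0_norm.
    apply: le_trans (ler_normB _ _) _; rewrite addrC; exact: lerD.
  have e3 : t * (`|f.1.1| + `|f.1.2|) = `|p.1| + `|p.2| + 2 * M + 1.
    by rewrite /t divfK // gt_eqF.
  lra.
have [g gG Hg] := argmin (fun g => ev g p / (- slope f g)) HG.
move: gG; rewrite mem_filter => /andP[slg gF].
set t := ev g p / (- slope f g).
have nsl : 0 < - slope f g by rewrite oppr_gt0.
exists g, t; split => //.
- by apply: divr_ge0; [exact: evp | exact: ltW].
- apply/allP => h hF; rewrite ev_mv.
  case: (ltP (slope f h) 0) => slh.
    have : t <= ev h p / (- slope f h) by apply: Hg; rewrite mem_filter slh hF.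
    rewrite ler_pdivlMr ?oppr_gt0 // => H; lra.
  apply: addr_ge0; [exact: evp|]; apply: mulr_ge0 => //.
  by apply: divr_ge0; [exact: evp | exact: ltW].
- have sn : slope f g != 0 by rewrite lt_eqF.
  rewrite ev_mv /t; field; done.
- by rewrite lt_eqF.
Qed.

Definition cramer (f g : R * R * R) : R * R :=
  let d := f.1.1 * g.1.2 - g.1.1 * f.1.2 in
  ((- f.2 * g.1.2 + g.2 * f.1.2) / d, (- f.1.1 * g.2 + g.1.1 * f.2) / d).

Lemma cramerP f g p : ev f p = 0 -> ev g p = 0 ->
  f.1.1 * g.1.2 - g.1.1 * f.1.2 != 0 -> p = cramer f g.
Proof.
case: p => x y E1 E2 dn; rewrite /cramer /=.
have H1 : x * (f.1.1 * g.1.2 - g.1.1 * f.1.2) = - f.2 * g.1.2 + g.2 * f.1.2.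
  have : g.1.2 * ev f (x, y) - f.1.2 * ev g (x, y) = 0 by rewrite E1 E2; ring.
  rewrite /ev /= => H; lra.
have H2 : y * (f.1.1 * g.1.2 - g.1.1 * f.1.2) = - f.1.1 * g.2 + g.1.1 * f.2.
  have : g.1.1 * ev f (x, y) - f.1.1 * ev g (x, y) = 0 by rewrite E1 E2; ring.
  rewrite /ev /= => H; lra.
by rewrite -H1 -H2 !mulfK.
Qed.

End G2.
Section G3.
Variable R : realType.
Implicit Types (s : seq (R * R)) (F : seq (R * R * R)).

Lemma seg s f p (t1 t2 : R) : 0 <= t1 -> 0 <= t2 ->
  conv_hull s (mv f t1 p) -> conv_hull s (mv (negf f) t2 p) -> conv_hull s p.
Proof.
move=> t10 t20 H1 H2.
case: (eqVneq (t1 + t2) 0) => ht.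
  have t1z : t1 = 0 by lra.
  by move: H1; rewrite t1z /mv !mul0r addr0 subr0; case: p H2.
have tp : 0 < t1 + t2 by rewrite lt_def ht addr_ge0.
have E : p = (t2 / (t1 + t2) * (mv f t1 p).1 + (1 - t2 / (t1 + t2)) * (mv (negf f) t2 p).1,
    t2 / (t1 + t2) * (mv f t1 p).2 + (1 - t2 / (t1 + t2)) * (mv (negf f) t2 p).2).
  case: p H1 H2 => x y _ _; rewrite /mv /negf /=; congr pair; field; exact: ht.
rewrite {1}E; apply: hull_convex H1 H2 _; apply/andP; split; first by rewrite divr_ge0 // ltW.
by rewrite ler_pdivrMr // mul1r lerDr.
Qed.

Definition Vlist F := [seq p <- [seq cramer f g | f <- F, g <- F] | inS F p].

Lemma in_V F f g p : f \in F -> g \in F -> inS F p -> ev f p = 0 -> ev g p = 0 ->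
  f.1.1 * g.1.2 - g.1.1 * f.1.2 != 0 -> conv_hull (Vlist F) p.
Proof.
move=> fF gF Sp E1 E2 dn.
have pV : p \in Vlist F.
  by rewrite mem_filter Sp (cramerP E1 E2 dn) allpairs_f.
rewrite -(nth_index (0,0) pV); apply: hull_elem; by rewrite index_mem.
Qed.

Lemma ev_negf (f : R * R * R) (p : R * R) : ev (negf f) p = - ev f p.
Proof. rewrite /ev /negf /=; ring. Qed.

Lemma polyA F M : (forall f, f \in F -> 0 < `|f.1.1| + `|f.1.2|) ->
  (forall q, inS F q -> `|q.1| <= M /\ `|q.2| <= M) ->
  forall q, inS F q <-> conv_hull (Vlist F) q.
Proof.
move=> Hnd Hb.
have onedge : forall p f, inS F p -> f \in F -> ev f p = 0 -> conv_hull (Vlist F) p.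
  move=> p f Sp fF Ef.
  have [g1 [t1 [g1F t10 S1 E1 sl1]]] := forward Hb Sp (Hnd f fF).
  have ndn : 0 < `|(negf f).1.1| + `|(negf f).1.2| by rewrite /negf /= !normrN; exact: Hnd.
  have [g2 [t2 [g2F t20 S2 E2 sl2]]] := forward Hb Sp ndn.
  apply: (seg t10 t20).
    apply: (in_V fF g1F S1) => //.
      by rewrite ev_mv Ef add0r /slope; ring.
    by move: sl1; rewrite /slope; apply: contra => /eqP H; apply/eqP; lra.
  apply: (in_V fF g2F S2) => //.
    by rewrite ev_mv Ef add0r /slope /negf /=; ring.
  by move: sl2; rewrite /slope /negf /=; apply: contra => /eqP H; apply/eqP; lra.
move=> q; split; last first.
  apply: ev_hull => i Hi.
  by have := mem_nth (0,0) Hi; rewrite mem_filter => /andP[].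
move=> Sq.
set fv : R * R * R := ((1, 0), - q.1).
have nd1 : 0 < `|fv.1.1| + `|fv.1.2| by rewrite /= normr1 normr0 addr0.
have nd2 : 0 < `|(negf fv).1.1| + `|(negf fv).1.2| by rewrite /= normrN normr1 normrN normr0 addr0.
have [g1 [t1 [g1F t10 S1 E1 _]]] := forward Hb Sq nd1.
have [g2 [t2 [g2F t20 S2 E2 _]]] := forward Hb Sq nd2.
apply: (seg t10 t20); [exact: onedge S1 g1F E1 | exact: onedge S2 g2F E2].
Qed.

End G3.
Section G4.
Variable R : realType.
Implicit Types (s : seq (R * R)) (F : seq (R * R * R)).

Lemma lin_bound (a x e : R) : `|x| < e -> - (`|a| * e) <= a * x.
Proof.
move=> H; have H1 : `|a * x| <= `|a| * e by rewrite normrM ler_wpM2l // ltW.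
have := ler_norm (- (a * x)); rewrite normrN; lra.
Qed.

Lemma interior F (p r : R * R) : (forall f, f \in F -> 0 <= ev f p) ->
  (forall f, f \in F -> ev f p = 0 -> 0 < ev f r) ->
  exists c : R * R, exists e : R, 0 < e /\
    forall q : R * R, `|q.1 - c.1| < e -> `|q.2 - c.2| < e -> inS F q.
Proof.
move=> Hp Hr.
set h := (fun f => if 0 < ev f p then ev f p / (2 * (ev f p + `|ev f r|)) else 1).
have [d [d0 Hd]] : exists d, 0 < d /\ forall f, f \in F -> d <= h f.
  apply: posmin => f fF; rewrite /h; case: ifP => // H; apply: divr_gt0 => //.
  apply: mulr_gt0 => //; exact: ltr_wpDr.
set c := ((1 - d) * p.1 + d * r.1, (1 - d) * p.2 + d * r.2).
have evc : forall f, ev f c = (1 - d) * ev f p + d * ev f r by move=> f; rewrite /ev /=; ring.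
have cpos : forall f, f \in F -> 0 < ev f c.
  move=> f fF; rewrite evc; have := Hd f fF; rewrite /h.
  case: (ltP 0 (ev f p)) => hp.
    set x := ev f p; set y := ev f r => Hdf.
    have hxy : 0 < 2 * (x + `|y|) by apply: mulr_gt0 => //; exact: ltr_wpDr.
    move: Hdf; rewrite ler_pdivlMr // => Hdf.
    have := ler_norm (- y); rewrite normrN => ny.
    nra.
  have e0 : ev f p = 0 by apply/eqP; rewrite eq_le hp Hp.
  rewrite e0 mulr0 add0r => _; apply: mulr_gt0 => //; exact: Hr.
have [e [e0 He]] : exists e, 0 < e /\ forall f, f \in F -> e <= ev f c / (`|f.1.1| + `|f.1.2| + 1).
  apply: posmin => f fF; apply: divr_gt0; [exact: cpos | by rewrite ltr_wpDl // addr_ge0].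
exists c, e; split => // q h1 h2; apply/allP => f fF.
have := He f fF; rewrite ler_pdivlMr; last by rewrite ltr_wpDl // addr_ge0.
have -> : ev f q = ev f c + f.1.1 * (q.1 - c.1) + f.1.2 * (q.2 - c.2) by rewrite /ev; ring.
have := lin_bound f.1.1 h1; have := lin_bound f.1.2 h2; nra.
Qed.
End G4.
From mathcomp Require Import zify.
Section P1.
Variable R : realType.
Variables (Na Nb : nat) (kap : nat -> R) (m : nat).
Hypothesis Na1 : (1 <= Na)%N.
Hypothesis NaNb : (Na < Nb)%N.
Hypothesis per : forall l : nat, kap (l + (Na + Nb))%N = kap l.
Hypothesis mono : forall i j : nat, (1 <= i)%N -> (i < j)%N -> (j <= Na + Nb)%N -> kap i < kap j.

Local Notation N := (Na + Nb)%N.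
Definition U (i : nat) := kap (m + i)%N.

Lemma per_mul x k : kap (x + k * N)%N = kap x.
Proof.
elim: k => [|k IH]; first by rewrite mul0n addn0.
by rewrite mulSnr addnA per IH.
Qed.

Lemma kap_mod x : kap x = kap (x %% N)%N.
Proof. by rewrite {1}(divn_eq x N) addnC per_mul. Qed.

Definition bb := if (m %% N == 0)%N then N else (m %% N)%N.
Definition E i := if (bb + i <= N)%N then (bb + i)%N else (bb + i - N)%N.

Lemma UE i : (i < N)%N -> U i = kap (E i).
Proof.
move=> iN; rewrite /U /E /bb kap_mod [in RHS]kap_mod.
have Npos : (0 < N)%N by lia.
congr kap.
case: (eqVneq (m %% N)%N 0%N) => H.
  rewrite -modnDml H add0n.
  case: ifP => H2.
    have -> : (N + i = i + N)%N by lia.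
    by rewrite modnDr.
  by rewrite addKn.
have Hm : (m %% N < N)%N by rewrite ltn_mod.
rewrite -modnDml.
case: ifP => H2; first by [].
move/negbT: H2; rewrite -ltnNge => H2.
by rewrite -[in LHS](subnK (ltnW H2)) modnDr.
Qed.

Lemma bb_range : (1 <= bb <= N)%N.
Proof.
rewrite /bb; case: eqP => H; first lia.
have : (m %% N < N)%N by rewrite ltn_mod; lia.
lia.
Qed.

Lemma cmpU i j : (i < j)%N -> (j < N)%N ->
  [/\ (bb + j <= N)%N -> U i < U j,
      (N < bb + i)%N -> U i < U j &
      (bb + i <= N)%N -> (N < bb + j)%N -> U j < U i].
Proof.
move=> ij jN; have iN : (i < N)%N by lia.
have [b1 b2] := andP bb_range.
rewrite (UE iN) (UE jN) /E; split => H1.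
- rewrite ifT; last lia. rewrite ifT; last lia. apply: mono; lia.
- have Hj : (N < bb + j)%N by lia.
  rewrite leqNgt H1 /= leqNgt Hj /=; apply: mono; lia.
- move=> H2; rewrite H1 leqNgt H2 /=; apply: mono; lia.
Qed.

Lemma Upos i j k : (i < j)%N -> (j < k)%N -> (k < N)%N ->
  0 < (U j - U i) * (U k - U i) * (U k - U j).
Proof.
move=> ij jk kN.
have [a1 a2 a3] := cmpU ij (ltn_trans jk kN).
have [c1 c2 c3] := cmpU (ltn_trans ij jk) kN.
have [d1 d2 d3] := cmpU jk kN.
case: (leqP (bb + k) N) => hk.
  have h1 := a1 ltac:(lia); have h2 := c1 hk; have h3 := d1 hk.
  by rewrite !mulr_gt0 // subr_gt0.
case: (leqP (bb + j) N) => hj.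
  have h1 := a1 hj; have h2 := c3 ltac:(lia) hk; have h3 := d3 hj hk.
  rewrite -mulrA mulr_gt0 ?subr_gt0 // nmulr_rgt0 // subr_lt0 //.
case: (leqP (bb + i) N) => hi.
  have h1 := a3 hi hj; have h2 := c3 hi hk; have h3 := d2 hj.
  rewrite mulr_gt0 ?subr_gt0 // nmulr_rgt0 // subr_lt0 //.
have h1 := a2 hi; have h2 := c2 hi; have h3 := d2 hj.
by rewrite !mulr_gt0 // subr_gt0.
Qed.

Lemma UN : U N = U 0.
Proof. by rewrite /U addn0 per. Qed.

Lemma Uneq i j : (i < j)%N -> (j < N)%N -> U i != U j.
Proof.
move=> ij jN; have [a1 a2 a3] := cmpU ij jN.
case: (leqP (bb + j) N) => hj; first by rewrite lt_eqF // a1.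
case: (leqP (bb + i) N) => hi; first by rewrite gt_eqF // a3.
by rewrite lt_eqF // a2.
Qed.

Definition Lf (a b : R) (q : R * R) := q.2 - (a + b) * q.1 + a * b.
Definition sg (a b : R) q := (b - a) * Lf a b q.
Definition DD (a b c : R) := (b - a) * (c - a) * (c - b).

Lemma sgC a b q : sg a b q = - sg b a q.
Proof. rewrite /sg /Lf; ring. Qed.

Lemma identD (u0 uj ui uk : R) q :
  DD u0 uj uk * sg ui uk q = - DD uj ui uk * sg u0 uk q + DD u0 ui uk * sg uj uk q.
Proof. rewrite /DD /sg /Lf; ring. Qed.

Definition cons (q : R * R) := forall i, (Na <= i <= Nb)%N ->
  0 <= sg (U (i - Na)) (U i) q /\ 0 <= sg (U i) (U (i + Na)) q.

Lemma ivt (g : nat -> R) n : forall a, 0 <= g a -> g (a + n.+1)%N <= 0 ->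
  exists i, [/\ (a <= i < a + n.+1)%N, 0 <= g i & g i.+1 <= 0].
Proof.
elim: n => [|n IH] a ga gb.
  exists a; split; first lia.
   exact: ga.
  by rewrite -addn1.
case: (leP (g a.+1) 0) => H.
  exists a; split; first lia.
   exact: ga.
  exact: H.
have [i [/andP[i1 i2] gi gi1]] := IH a.+1 (ltW H) ltac:(by rewrite addSnnS).
by exists i; split => //; rewrite addSnnS in i2; lia.
Qed.

Lemma DDpos i j k : (i < j)%N -> (j < k)%N -> (k < N)%N -> 0 < DD (U i) (U j) (U k).
Proof. exact: Upos. Qed.

Lemma triangle q : cons q -> exists i, (Na <= i < Nb)%N /\
  exists a b c : R, [/\ 0 <= a, 0 <= b, 0 <= c, a + b + c = 1 &
    q = (a * U 0 + b * U i + c * U i.+1, a * U 0 ^+ 2 + b * U i ^+ 2 + c * U i.+1 ^+ 2)].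
Proof.
move=> Hc.
set g := fun i => sg (U 0) (U i) q.
have gNa : 0 <= g Na.
  by have [] := Hc Na ltac:(lia); rewrite subnn.
have gNb : g (Na + (Nb - Na).-1.+1)%N <= 0.
  have -> : (Na + (Nb - Na).-1.+1 = Nb)%N by lia.
  have [_] := Hc Nb ltac:(lia).
  by rewrite addnC UN /g sgC oppr_ge0.
have [i [/andP[i1 i2] gi gi1]] := ivt gNa gNb.
have iNb : (i < Nb)%N by lia.
exists i; split; first lia.
have [H1 _] := Hc i.+1 ltac:(lia).
set j := (i.+1 - Na)%N.
have Dp : 0 < DD (U 0) (U i) (U i.+1) by apply: DDpos; lia.
have sii : 0 <= sg (U i) (U i.+1) q.
  have Dj : 0 < DD (U 0) (U j) (U i.+1) by apply: DDpos; rewrite /j; lia.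
  have Dji : 0 <= DD (U j) (U i) (U i.+1).
    case: (eqVneq j i) => ji; first by rewrite ji /DD subrr !mul0r.
    apply: ltW; apply: DDpos; rewrite /j in ji *; lia.
  rewrite -(pmulr_rge0 _ Dj) identD.
  apply: addr_ge0; last exact: mulr_ge0 (ltW _) H1.
  by rewrite mulNr -mulrN; apply: mulr_ge0 => //; rewrite oppr_ge0.
set D := DD (U 0) (U i) (U i.+1).
exists (sg (U i) (U i.+1) q / D), (- g i.+1 / D), (g i / D).
have Dn : D != 0 by rewrite gt_eqF.
have := Dn; rewrite /D /DD !mulf_eq0 !negb_or => /andP[/andP[d1 d2] d3].
split.
- exact: divr_ge0 (ltW Dp).
- by apply: divr_ge0 (ltW Dp); rewrite oppr_ge0.
- exact: divr_ge0 (ltW Dp).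
- rewrite /g /sg /Lf /D /DD; field.
  by rewrite d1 d2 d3.
- rewrite {1}[q]surjective_pairing /g /sg /Lf /D /DD /=; congr pair; field; by rewrite d1 d2 d3.
Qed.
Lemma prod_heav (s : seq nat) (x y : nat -> R) :
  \prod_(k <- s) (heaviside (x k) * heaviside (y k)) = 1 <->
  (forall k, k \in s -> 0 <= x k /\ 0 <= y k).
Proof.
elim: s => [|a s IH]; first by rewrite big_nil; split.
rewrite big_cons /heaviside; split.
  case: ifP => ha; case: ifP => hb; rewrite !(mul0r, mulr0, mul1r); last 3 first.
  - by move/esym/eqP; rewrite oner_eq0.
  - by move/esym/eqP; rewrite oner_eq0.
  - by move/esym/eqP; rewrite oner_eq0.
  move/IH => H k; rewrite inE => /orP[/eqP ->|ks]; [by [] | exact: H].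
move=> H; have [ha hb] := H a (mem_head _ _).
rewrite ha hb !mul1r; apply/IH => k ks; apply: H; by rewrite inE ks orbT.
Qed.

Lemma qt_sg a b q : qtilde kap a b q = sg (kap b) (kap a) q.
Proof. rewrite /qtilde /qmn /sg /Lf; ring. Qed.

Lemma region_cons q : regionP kap Na Nb m q <-> cons q.
Proof.
rewrite /regionP /Pm /rho /=.
rewrite (prod_heav _ (fun k => qtilde kap k (k - Na) q) (fun k => qtilde kap (k + Na) k q)).
split.
  move=> H i /andP[i1 i2].
  have := H (m + i)%N; rewrite mem_index_iota => /(_ ltac:(lia)).
  rewrite !qt_sg /U.
  have -> : (m + i - Na = m + (i - Na))%N by lia.
  by rewrite addnA.
move=> H k; rewrite mem_index_iota => hk.
have := H (k - m)%N ltac:(lia); rewrite !qt_sg /U.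
have -> : (m + (k - m - Na) = k - Na)%N by lia.
have -> : (m + (k - m) = k)%N by lia.
by have -> : (m + (k - m + Na) = k + Na)%N by lia.
Qed.

Definition cf (x y : R) : R * R * R := ((- (y - x) * (x + y), y - x), (y - x) * (x * y)).
Lemma ev_cf x y q : ev (cf x y) q = sg x y q.
Proof. rewrite /ev /cf /sg /Lf /=; ring. Qed.

Definition Fl := [seq cf (U (i - Na)) (U i) | i <- index_iota Na Nb.+1] ++
                 [seq cf (U i) (U (i + Na)) | i <- index_iota Na Nb.+1].

Lemma inS_cons q : inS Fl q <-> cons q.
Proof.
rewrite /inS all_cat !all_map; split.
  move=> /andP[/allP H1 /allP H2] i hi.
  have hi' : i \in index_iota Na Nb.+1 by rewrite mem_index_iota; lia.
  by have := H1 i hi'; have := H2 i hi'; rewrite /= !ev_cf.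
move=> H; apply/andP; split; apply/allP => i; rewrite mem_index_iota => hi /=;
  rewrite ev_cf; have [] := H i ltac:(lia) => //.
Qed.

Lemma Fl_nd f : f \in Fl -> 0 < `|f.1.1| + `|f.1.2|.
Proof.
have key : forall x y : R, x != y -> 0 < `|(cf x y).1.1| + `|(cf x y).1.2|.
  move=> x y xy; rewrite /cf /=; apply: ltr_wpDl => //.
  by rewrite normr_gt0 subr_eq0 eq_sym.
rewrite mem_cat => /orP[] /mapP[i]; rewrite mem_index_iota => hi ->; apply: key.
  apply: Uneq; lia.
case: (ltnP (i + Na) N) => h.
  apply: Uneq; lia.
have -> : (i + Na = N)%N by lia.
by rewrite UN eq_sym; apply: Uneq; lia.
Qed.

Lemma sgQ x y t : sg x y (t, t ^+ 2) = (y - x) * (t - x) * (t - y).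
Proof. rewrite /sg /Lf /=; ring. Qed.

Lemma Qin l j k : (j < k)%N -> (k <= N)%N -> ((l <= j)%N \/ (k <= l < N)%N) ->
  0 <= sg (U j) (U k) (U l, U l ^+ 2).
Proof.
move=> jk kN hl; rewrite sgQ.
case: (eqVneq l j) => [->|lj]; first by rewrite subrr mulr0 mul0r.
case: (eqVneq l k) => [->|lk]; first by rewrite subrr mulr0.
case: hl => hl.
  have lj' : (l < j)%N by rewrite ltn_neqAle lj hl.
  case: (ltnP k N) => kN'.
    have := DDpos lj' jk kN'; rewrite /DD => H; apply: ltW; move: H.
    by have -> : (U k - U j) * (U l - U j) * (U l - U k) = (U j - U l) * (U k - U l) * (U k - U j) by ring.
  have -> : k = N by apply/eqP; rewrite eqn_leq kN kN'.
  rewrite UN.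
  case: (eqVneq l 0%N) => [->|l0]; first by rewrite subrr mulr0.
  have := DDpos (i := 0%N) (j := l) (k := j) ltac:(lia) lj' ltac:(lia); rewrite /DD => H; apply: ltW; move: H.
  by have -> : (U 0 - U j) * (U l - U j) * (U l - U 0) = (U l - U 0) * (U j - U 0) * (U j - U l) by ring.
have kl : (k < l)%N by lia.
by apply: ltW; have := DDpos jk kl ltac:(lia); rewrite /DD.
Qed.

Lemma Q0cons : cons (U 0, U 0 ^+ 2).
Proof.
move=> i hi; split; apply: Qin; lia.
Qed.

Lemma Qcons1 l : Na = 1%N -> (l <= Nb)%N -> cons (U l, U l ^+ 2).
Proof.
move=> N1 lN i hi; split; apply: Qin; lia.
Qed.
Lemma comb_le (a b c x y z M : R) : 0 <= a -> 0 <= b -> 0 <= c -> a + b + c = 1 ->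
  x <= M -> y <= M -> z <= M -> a * x + b * y + c * z <= M.
Proof.
move=> a0 b0 c0 s1 hx hy hz.
have := ler_wpM2l a0 hx; have := ler_wpM2l b0 hy; have := ler_wpM2l c0 hz.
move=> h1 h2 h3.
have : a * x + b * y + c * z <= a * M + b * M + c * M by lra.
by rewrite -!mulrDl s1 mul1r.
Qed.

Lemma comb_ge (a b c x y z M : R) : 0 <= a -> 0 <= b -> 0 <= c -> a + b + c = 1 ->
  M <= x -> M <= y -> M <= z -> M <= a * x + b * y + c * z.
Proof.
move=> a0 b0 c0 s1 hx hy hz.
have := ler_wpM2l a0 hx; have := ler_wpM2l b0 hy; have := ler_wpM2l c0 hz.
move=> h1 h2 h3.
have : a * M + b * M + c * M <= a * x + b * y + c * z by lra.
by rewrite -!mulrDl s1 mul1r.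
Qed.

Lemma comb_par (a b c x y z : R) : 0 <= a -> 0 <= b -> 0 <= c -> a + b + c = 1 ->
  (a * x + b * y + c * z) ^+ 2 <= a * x ^+ 2 + b * y ^+ 2 + c * z ^+ 2.
Proof.
move=> a0 b0 c0 s1.
have -> : c = 1 - a - b by lra.
rewrite -subr_ge0.
have -> : a * x ^+ 2 + b * y ^+ 2 + (1 - a - b) * z ^+ 2 -
   (a * x + b * y + (1 - a - b) * z) ^+ 2
   = a * b * (x - y) ^+ 2 + a * (1 - a - b) * (x - z) ^+ 2 + b * (1 - a - b) * (y - z) ^+ 2.
  have e : a + b + (1 - a - b) = 1 by ring.
  rewrite -[X in X * x ^+ 2]mulr1 -{1}e.
  ring.
have c0' : 0 <= 1 - a - b by lra.
apply: addr_ge0; [apply: addr_ge0|]; (apply: mulr_ge0; [exact: mulr_ge0 | exact: sqr_ge0]).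
Qed.

Definition Mb := \sum_(l < Nb.+1) (`|U l| + U l ^+ 2).

Lemma termM l : (l <= Nb)%N -> `|U l| <= Mb /\ U l ^+ 2 <= Mb.
Proof.
move=> hl.
have H : `|U l| + U l ^+ 2 <= Mb.
  rewrite /Mb (bigD1 (Ordinal (n := Nb.+1) (m := l) ltac:(lia))) //= lerDl.
  by apply: sumr_ge0 => i _; rewrite addr_ge0 // sqr_ge0.
split; [have := sqr_ge0 (U l) | have := normr_ge0 (U l)]; lra.
Qed.

Lemma cons_par q : cons q -> q.1 ^+ 2 <= q.2.
Proof.
move=> /triangle [i [hi [a [b [c [a0 b0 c0 s1 ->]]]]]] /=.
exact: comb_par.
Qed.

Lemma cons_bounded q : cons q -> `|q.1| <= Mb /\ `|q.2| <= Mb.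
Proof.
move=> /triangle [i [hi [a [b [c [a0 b0 c0 s1 ->]]]]]] /=.
have [h01 h02] := termM (l := 0) ltac:(lia).
have [h11 h12] := termM (l := i) ltac:(lia).
have [h21 h22] := termM (l := i.+1) ltac:(lia).
split.
  apply: le_trans (ler_normD _ _) _; apply: le_trans (lerD (ler_normD _ _) (lexx _)) _.
  rewrite !normrM !(ger0_norm a0, ger0_norm b0, ger0_norm c0).
  exact: comb_le.
rewrite ger0_norm; first by apply: comb_le.
by rewrite !addr_ge0 // mulr_ge0 // sqr_ge0.
Qed.

Lemma hull3 s i j k (a b c : R) (hi : (i < size s)%N) (hj : (j < size s)%N) (hk : (k < size s)%N) :
  0 <= a -> 0 <= b -> 0 <= c -> a + b + c = 1 ->
  conv_hull s (a * (nth (0,0) s i).1 + b * (nth (0,0) s j).1 + c * (nth (0,0) s k).1,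
               a * (nth (0,0) s i).2 + b * (nth (0,0) s j).2 + c * (nth (0,0) s k).2).
Proof.
move=> a0 b0 c0 s1.
set I := Ordinal hi; set J := Ordinal hj; set K := Ordinal hk.
exists (fun x => a * (x == I)%:R + b * (x == J)%:R + c * (x == K)%:R); split.
  by move=> x; rewrite !addr_ge0 // mulr_ge0 // ler0n.
have sm : forall h : 'I_(size s) -> R,
    \sum_x (a * (x == I)%:R + b * (x == J)%:R + c * (x == K)%:R) * h x
    = a * h I + b * h J + c * h K.
  move=> h.
  transitivity (\sum_x (a * ((x == I)%:R * h x) + b * ((x == J)%:R * h x) + c * ((x == K)%:R * h x))).
    by apply: eq_bigr => x _; ring.
  by rewrite !big_split /= -!mulr_sumr !sum_ind.
split.
  transitivity (\sum_x (a * (x == I)%:R + b * (x == J)%:R + c * (x == K)%:R) * (fun _ : 'I_(size s) => (1 : R)) x).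
    by apply: eq_bigr => x _; rewrite mulr1.
  by rewrite sm !mulr1.
by rewrite !sm.
Qed.

Lemma nth_Qpts l : (l <= Nb)%N -> nth (0,0) (Qpts kap m Nb) l = (U l, U l ^+ 2).
Proof.
move=> hl; rewrite /Qpts (nth_map 0%N); last by rewrite size_iota.
by rewrite nth_iota.
Qed.

Lemma size_Qpts : size (Qpts kap m Nb) = Nb.+1.
Proof. by rewrite size_map size_iota. Qed.

Lemma cons_hull q : cons q -> conv_hull (Qpts kap m Nb) q.
Proof.
move=> /triangle [i [hi [a [b [c [a0 b0 c0 s1 ->]]]]]].
have h0 : (0 < size (Qpts kap m Nb))%N by rewrite size_Qpts.
have h1 : (i < size (Qpts kap m Nb))%N by rewrite size_Qpts; lia.
have h2 : (i.+1 < size (Qpts kap m Nb))%N by rewrite size_Qpts; lia.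
have := hull3 h0 h1 h2 a0 b0 c0 s1.
by rewrite !nth_Qpts //; lia.
Qed.
Lemma sg_mid x y s t :
  sg x y ((s + t) / 2, (s ^+ 2 + t ^+ 2) / 2) = (sg x y (s, s ^+ 2) + sg x y (t, t ^+ 2)) / 2.
Proof. rewrite /sg /Lf /=; field; done. Qed.

Lemma Hreg q : regionP kap Na Nb m q <-> inS Fl q.
Proof. by rewrite region_cons inS_cons. Qed.

Lemma interior_pt : exists (c : R * R) (e : R), 0 < e /\
     forall q : R * R, `|q.1 - c.1| < e -> `|q.2 - c.2| < e -> regionP kap Na Nb m q.
Proof.
have Hp : forall f, f \in Fl -> 0 <= ev f (U 0, U 0 ^+ 2).
  by move=> f fF; have /inS_cons/allP := Q0cons; apply.
have DP := DDpos (i := 0%N) (j := Na) (k := Nb) ltac:(lia) NaNb ltac:(lia).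
have Hr : forall f, f \in Fl -> ev f (U 0, U 0 ^+ 2) = 0 ->
    0 < ev f ((U Na + U Nb) / 2, (U Na ^+ 2 + U Nb ^+ 2) / 2).
  move=> f; rewrite mem_cat => /orP[] /mapP[i]; rewrite mem_index_iota => hi ->;
    rewrite !ev_cf sg_mid !sgQ.
    case: (eqVneq i Na) => [->|iNa].
      rewrite subnn => _; rewrite subrr mulr0 add0r; apply: divr_gt0; last lra.
      by move: DP; rewrite /DD.
    have := DDpos (i := 0%N) (j := (i - Na)%N) (k := i) ltac:(lia) ltac:(lia) ltac:(lia).
    rewrite /DD => H E; exfalso; move: H; rewrite lt_def => /andP[/eqP[]].
    by rewrite -E; ring.
  case: (ltnP (i + Na) N) => h.
    have := DDpos (i := 0%N) (j := i) (k := (i + Na)%N) ltac:(lia) ltac:(lia) h.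
    rewrite /DD => H E; exfalso; move: H; rewrite lt_def => /andP[/eqP[]].
    by rewrite -E; ring.
  have ei : i = Nb by lia.
  have -> : (i + Na = N)%N by lia.
  rewrite UN ei => _; rewrite subrr mulr0 mul0r addr0; apply: divr_gt0; last lra.
  move: DP; rewrite /DD.
  by have -> : (U 0 - U Nb) * (U Na - U Nb) * (U Na - U 0) = (U Na - U 0) * (U Nb - U 0) * (U Nb - U Na) by ring.
have [c [e [e0 He]]] := interior Hp Hr.
exists c, e; split => // q h1 h2; apply/Hreg; exact: He.
Qed.

Lemma main :
  is_polygon (regionP kap Na Nb m) /\
  regionP kap Na Nb m `<=` [set q | q.1 ^+ 2 <= q.2] /\
  is_vertex (regionP kap Na Nb m) (Qpt kap m) /\
  regionP kap Na Nb m `<=` conv_hull (Qpts kap m Nb) /\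
  (Na = 1%N -> regionP kap Na Nb m = conv_hull (Qpts kap m Nb)) /\
  regionP kap Na Nb m `<=`
    [set q | \big[Order.min/kap m]_(m <= l < (m + Nb).+1) kap l <= q.1 <=
             \big[Order.max/kap m]_(m <= l < (m + Nb).+1) kap l].
Proof.
have Hpar : regionP kap Na Nb m `<=` [set q | q.1 ^+ 2 <= q.2].
  by move=> q /region_cons /cons_par.
split.
  split; last exact: interior_pt.
  exists (Vlist Fl); apply/seteqP; split => q Hq.
    apply/(polyA Fl_nd (M := Mb)); last exact/Hreg.
    by move=> p /inS_cons /cons_bounded.
  apply/Hreg; apply/(polyA Fl_nd (M := Mb)) => //.
  by move=> p /inS_cons /cons_bounded.
split; first exact: Hpar.
split.
  have QE : Qpt kap m = (U 0, U 0 ^+ 2) by rewrite /Qpt /U addn0.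
  rewrite QE; split; first exact/region_cons/Q0cons.
  move=> [x1 x2] [y1 y2] t Hx Hy /andP[t0 t1] E.
  have px := Hpar _ Hx; have py := Hpar _ Hy; rewrite /= in px py.
  case: E => E1 E2.
  have h1t : 0 < 1 - t by lra.
  have a1 := ler_wpM2l (ltW t0) px.
  have a2 := ler_wpM2l (ltW h1t) py.
  have key : t * (1 - t) * (x1 - y1) ^+ 2 <= 0.
    have -> : t * (1 - t) * (x1 - y1) ^+ 2
      = t * x1 ^+ 2 + (1 - t) * y1 ^+ 2 - (t * x1 + (1 - t) * y1) ^+ 2 by ring.
    rewrite -E1 E2; lra.
  have sq : (x1 - y1) ^+ 2 <= 0 by rewrite -(pmulr_rle0 _ (mulr_gt0 t0 h1t)).
  have sq0 : (x1 - y1) ^+ 2 = 0 by apply/eqP; rewrite eq_le sq sqr_ge0.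
  move/eqP: sq0; rewrite sqrf_eq0 subr_eq0 => /eqP xy.
  have yU : y1 = U 0 by rewrite E1 xy; ring.
  have xU : x1 = U 0 by rewrite xy.
  rewrite xU in px; rewrite yU in py.
  have b1 : 0 <= t * (x2 - U 0 ^+ 2) by apply: mulr_ge0; [exact: ltW | rewrite subr_ge0].
  have b2 : 0 <= (1 - t) * (y2 - U 0 ^+ 2) by apply: mulr_ge0; [exact: ltW | rewrite subr_ge0].
  have sm : t * (x2 - U 0 ^+ 2) + (1 - t) * (y2 - U 0 ^+ 2) = 0.
    have -> : t * (x2 - U 0 ^+ 2) + (1 - t) * (y2 - U 0 ^+ 2) = (t * x2 + (1 - t) * y2) - U 0 ^+ 2 by ring.
    by rewrite -E2 subrr.
  have z1 : t * (x2 - U 0 ^+ 2) = 0 by lra.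
  have z2 : (1 - t) * (y2 - U 0 ^+ 2) = 0 by lra.
  move/eqP: z1; rewrite mulf_eq0 gt_eqF //= subr_eq0 => /eqP ->.
  move/eqP: z2; rewrite mulf_eq0 gt_eqF //= subr_eq0 => /eqP ->.
  by rewrite xU yU.
split; first by move=> q /region_cons /cons_hull.
split.
  move=> N1; apply/seteqP; split => q Hq; first exact/cons_hull/region_cons.
  apply/Hreg; apply: (ev_hull _ Hq) => i; rewrite size_Qpts => hi.
  rewrite nth_Qpts; last lia.
  apply/inS_cons; apply: Qcons1 => //; lia.
move=> q /region_cons /triangle [i [hi [a [b [c [a0 b0 c0 s1 ->]]]]]] /=.
have mn : forall l, (l <= Nb)%N -> \big[Order.min/kap m]_(m <= l < (m + Nb).+1) kap l <= U l.
  move=> l hl; rewrite /U; apply: ge_bigmin_seq => //; rewrite mem_index_iota; lia.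
have mx : forall l, (l <= Nb)%N -> U l <= \big[Order.max/kap m]_(m <= l < (m + Nb).+1) kap l.
  move=> l hl; rewrite /U; apply: le_bigmax_seq => //; rewrite mem_index_iota; lia.
apply/andP; split.
  by apply: comb_ge; rewrite // ?mn //; lia.
by apply: comb_le; rewrite // ?mx //; lia.
Qed.
End P1.

Theorem lemma5p1 (R : realType) (Na Nb : nat) (kap : nat -> R) (m : nat) :
  (1 <= Na)%N -> (Na < Nb)%N ->
  (forall l : nat, kap (l + (Na + Nb))%N = kap l) ->
  (forall i j : nat, (1 <= i)%N -> (i < j)%N -> (j <= Na + Nb)%N -> kap i < kap j) ->
  is_polygon (regionP kap Na Nb m) /\
  regionP kap Na Nb m `<=` [set q | q.1 ^+ 2 <= q.2] /\
  is_vertex (regionP kap Na Nb m) (Qpt kap m) /\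
  regionP kap Na Nb m `<=` conv_hull (Qpts kap m Nb) /\
  (Na = 1%N -> regionP kap Na Nb m = conv_hull (Qpts kap m Nb)) /\
  regionP kap Na Nb m `<=`
    [set q | \big[Order.min/kap m]_(m <= l < (m + Nb).+1) kap l <= q.1 <=
             \big[Order.max/kap m]_(m <= l < (m + Nb).+1) kap l].
Proof.
move=> Na1 NaNb per mono; exact: (main m Na1 NaNb per mono).
Qed.
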